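(* The sign function is not definable in $Q_0$: there is no $\Sigma_m$-term $t(x)$ with only variable $x$ such that $t(q)=\mathrm{sign}(q)$ for all rationals $q$ (evaluated in $Q_0$), where $\mathrm{sign}(q)=-1$ if $q<0$, $0$ if $q=0$, $1$ if $q>0$.
   Context: $\Sigma_m=(0,1,+,\cdot,-,{}^{-1})$. $Q_0$ is the field of rational numbers with its usual $0,1,+,\cdot,-$ and with the total inverse $q^{-1}=1/q$ for $q\neq 0$ and $0^{-1}=0$. *)

(* Defs.v *)
From HB Require Import structures.
From mathcomp Require Import all_boot all_order all_algebra.
Set Implicit Arguments. Unset Strict Implicit. Unset Printing Implicit Defensive.
Import Order.TTheory GRing.Theory Num.Theory.
Local Open Scope ring_scope.

Inductive term : Type :=
  | tVar : term
  | tZero : term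
  | tOne : term
  | tAdd : term -> term -> term
  | tMul : term -> term -> term
  | tNeg : term -> term
  | tInv : term -> term.

Definition tinv (q : rat) : rat := if q == 0 then 0 else q^-1.

Fixpoint eval_term (t : term) (q : rat) : rat :=
  match t with
  | tVar => q
  | tZero => 0
  | tOne => 1
  | tAdd a b => eval_term a q + eval_term b q
  | tMul a b => eval_term a q * eval_term b q
  | tNeg a => - eval_term a q
  | tInv a => tinv (eval_term a q)
  end.

Definition sign (q : rat) : rat :=
  if q < 0 then -1 else if q == 0 then 0 else 1.

(* Main.v *)
Require Import Defs.
From mathcomp Require Import all_boot all_order all_algebra.
Import Order.TTheory GRing.Theory Num.Theory.
Local Open Scope ring_scope.

Lemma many_roots (p : {poly rat}) (c : rat) : c != 0 ->
  (forall n : nat, root p (c * n.+1%:R)) -> p = 0.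
Proof.
move=> c0 H.
apply: (@roots_geq_poly_eq0 _ p [seq c * i.+1%:R | i <- iota 0 (size p)]).
- by apply/allP=> x /mapP [i _ ->].
- rewrite map_inj_uniq ?iota_uniq // => i j /(mulfI c0) /eqP.
  by rewrite eqr_nat eqSS => /eqP.
- by rewrite size_map size_iota.
Qed.

Lemma term_rat (t : term) : exists P Q B : {poly rat},
  B != 0 /\ forall q, B.[q] != 0 -> Q.[q] != 0 /\ eval_term t q = P.[q] / Q.[q].
Proof.
elim: t => /=.
- exists 'X, 1, 1; split; first exact: oner_neq0.
  by move=> q _; rewrite !hornerE ?invr1 ?divr1 ?mulr1 ?oner_neq0.
- exists 0, 1, 1; split; first exact: oner_neq0.
  by move=> q _; rewrite !hornerE ?invr1 ?mul0r ?oner_neq0.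
- exists 1, 1, 1; split; first exact: oner_neq0.
  by move=> q _; rewrite !hornerE ?invr1 ?divr1 ?mulr1 ?oner_neq0.
- move=> a [P1 [Q1 [B1 [nB1 H1]]]] b [P2 [Q2 [B2 [nB2 H2]]]].
  exists (P1 * Q2 + P2 * Q1), (Q1 * Q2), (B1 * B2); split.
    by rewrite mulf_neq0.
  move=> q; rewrite hornerM mulf_eq0 negb_or => /andP [b1 b2].
  have [q1 e1] := H1 q b1; have [q2 e2] := H2 q b2.
  rewrite !hornerE mulf_neq0 //; split => //.
  by rewrite e1 e2 addf_div.
- move=> a [P1 [Q1 [B1 [nB1 H1]]]] b [P2 [Q2 [B2 [nB2 H2]]]].
  exists (P1 * P2), (Q1 * Q2), (B1 * B2); split.
    by rewrite mulf_neq0.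
  move=> q; rewrite hornerM mulf_eq0 negb_or => /andP [b1 b2].
  have [q1 e1] := H1 q b1; have [q2 e2] := H2 q b2.
  rewrite !hornerE mulf_neq0 //; split => //.
  by rewrite e1 e2 mulf_div.
- move=> a [P1 [Q1 [B1 [nB1 H1]]]].
  exists (- P1), Q1, B1; split => // q b1.
  have [q1 e1] := H1 q b1; split => //.
  by rewrite e1 hornerN mulNr.
- move=> a [P1 [Q1 [B1 [nB1 H1]]]].
  case: (eqVneq P1 0) => [P0|nP].
    exists 0, 1, B1; split => // q b1.
    have [q1 e1] := H1 q b1; rewrite P0 in e1.
    by rewrite e1 !hornerE ?mul0r ?oner_neq0 /tinv ?mul0r eqxx ?invr1 ?mul0r.
  exists Q1, P1, (B1 * P1); split; first by rewrite mulf_neq0.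
  move=> q; rewrite hornerM mulf_eq0 negb_or => /andP [b1 p1].
  have [q1 e1] := H1 q b1; split => //.
  rewrite e1 /tinv mulf_eq0 invr_eq0 (negbTE p1) (negbTE q1) /=.
  by rewrite invfM invrK mulrC.
Qed.

Theorem corollary3 :
  ~ exists t : term, forall q : rat, eval_term t q = sign q.
Proof.
move=> [t Ht].
have [P [Q [B [nB H]]]] := term_rat t.
have key : forall (c : rat), c != 0 -> (forall n : nat, sign (c * n.+1%:R) = c) ->
    B * (P - c *: Q) = 0.
  move=> c c0 hs; apply: (@many_roots _ c c0) => n.
  rewrite /root hornerM mulf_eq0.
  case: eqP => [_|/eqP b] //=.
  have [q1 e1] := H _ b.
  move: (Ht (c * n.+1%:R)); rewrite hs e1 => e.
  set x := c * n.+1%:R in e q1 *.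
  by rewrite !hornerE -e divfK // subrr.
have k1 : B * (P - 1 *: Q) = 0.
  apply: key; first exact: oner_neq0.
  by move=> n; rewrite /sign mul1r ltNge ler0n /= pnatr_eq0.
have k2 : B * (P - (-1) *: Q) = 0.
  apply: key; first by rewrite oppr_eq0 oner_neq0.
  by move=> n; rewrite /sign mulN1r oppr_lt0 ltr0Sn.
move/eqP: k1; rewrite mulf_eq0 (negbTE nB) /= scale1r subr_eq0 => /eqP PQ.
move/eqP: k2; rewrite mulf_eq0 (negbTE nB) /= PQ scaleN1r opprK -mulr2n.
move=> /eqP Q2.
have Q0 : forall q, Q.[q] = 0.
  move=> q; apply/eqP; move: (congr1 (fun p => p.[q]) Q2) => /=.
  by rewrite hornerMn horner0 => /eqP; rewrite mulrn_eq0.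
suff B0 : B = 0 by rewrite B0 eqxx in nB.
apply: (@many_roots B 1 (oner_neq0 _)) => n.
apply/negPn/negP => b.
by have [] := H _ b; rewrite Q0 eqxx.
Qed.
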